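(* Let $\tau$ be a distributive triangle function on $\Delta^+$, $\Sigma$ a ring of subsets of $\Omega\ne\emptyset$, $\gamma$ a $\tau$-decomposable measure on $\Sigma$, and $E\in\Sigma$. Let $f=\sum_{i=1}^n\alpha_i\chi_{E_i}$ with $\alpha_i\in[0,\infty)$ and $E_1,\dots,E_n\in\Sigma$ pairwise disjoint, and $g=\sum_{j=1}^m\beta_j\chi_{F_j}$ with $\beta_j\in[0,\infty)$ and $F_1,\dots,F_m\in\Sigma$ pairwise disjoint. If $f=g$ (as functions on $\Omega$), then $$\bigoplus_{i=1}^n\alpha_i\odot\gamma_{E\cap E_i}=\bigoplus_{j=1}^m\beta_j\odot\gamma_{E\cap F_j},$$ i.e. the $\gamma$-integral $\int_E f\,d\gamma$ of a simple function does not depend on its representation.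
   Context: $\Delta^+$: functions $F:[-\infty,+\infty]\to[0,1]$ non-decreasing, left-continuous on $\mathbb{R}$, $F(x)=0$ for $x\le0$, $F(+\infty)=1$; $\varepsilon_0(x)=1$ if $x>0$, else $0$. Triangle function: symmetric, associative $\tau:\Delta^+\times\Delta^+\to\Delta^+$, non-decreasing in each variable, identity $\varepsilon_0$; $G\oplus H=\tau(G,H)$, $\bigoplus_{k=1}^nG_k=\tau(G_1,\bigoplus_{k=2}^nG_k)$. For $c\ge0$, $c\odot G=\varepsilon_0$ if $c=0$, $(c\odot G)(x)=G(x/c)$ if $c>0$; $\tau$ is distributive if $c\odot(G\oplus H)=(c\odot G)\oplus(c\odot H)$ for all $c\ge0$, $G,H$. A $\tau$-decomposable measure on $\Sigma$ is $\gamma:\Sigma\to\Delta^+$ with $\gamma_\emptyset=\varepsilon_0$ and $\gamma_{A\cup B}=\tau(\gamma_A,\gamma_B)$ for disjoint $A,B\in\Sigma$. For a simple function $f=\sum_{i=1}^n x_i\chi_{E_i}$ ($x_i\ge0$, $E_i\in\Sigma$ pairwise disjoint) one defines $\int_Ef\,d\gamma=\bigoplus_{i=1}^nx_i\odot\gamma_{E\cap E_i}$. *)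

(* Defs.v *)
From Stdlib Require Import Reals Lra ClassicalDescription.
From Coquelicot Require Import Rbar.
Open Scope R_scope.

Record isDplus (F : Rbar -> R) : Prop := {
  dp_range : forall x, 0 <= F x <= 1;
  dp_mono  : forall x y, Rbar_le x y -> F x <= F y;
  dp_leftc : forall x : R, forall eps, 0 < eps ->
               exists d, 0 < d /\ forall y : R, x - d < y < x ->
                 Rabs (F (Finite y) - F (Finite x)) < eps;
  dp_zero  : forall x, Rbar_le x (Finite 0) -> F x = 0;
  dp_top   : F p_infty = 1 }.

Definition Dplus := { F : Rbar -> R | isDplus F }.

Definition dval (G : Dplus) : Rbar -> R := proj1_sig G.

Definition dle (G H : Dplus) : Prop := forall x, dval G x <= dval H x.

Definition eps0_fun (x : Rbar) : R :=
  match x with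
  | Finite r => if Rlt_dec 0 r then 1 else 0
  | p_infty => 1
  | m_infty => 0
  end.

Lemma eps0_isDplus : isDplus eps0_fun.
Proof.
split.
- intros [r| |]; simpl; try lra. destruct (Rlt_dec 0 r); lra.
- intros [r| |] [s| |]; simpl; try tauto; try lra.
  + intros H. destruct (Rlt_dec 0 r), (Rlt_dec 0 s); lra.
  + destruct (Rlt_dec 0 r); lra.
  + destruct (Rlt_dec 0 s); lra.
- intros x eps Heps. simpl. destruct (Rlt_dec 0 x) as [Hx|Hx].
  + exists x. split; [lra|]. intros y Hy.
    destruct (Rlt_dec 0 y); [|lra]. rewrite Rminus_diag, Rabs_R0. lra.
  + exists 1. split; [lra|]. intros y Hy.
    destruct (Rlt_dec 0 y); [lra|]. rewrite Rminus_diag, Rabs_R0. lra.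
- intros [r| |]; simpl; try tauto. intros H.
  destruct (Rlt_dec 0 r); lra.
- reflexivity.
Qed.

Definition eps0 : Dplus := exist _ eps0_fun eps0_isDplus.

(** c (.) G : epsilon_0 if c = 0, x |-> G(x/c) if c > 0.
    (Only c >= 0 is ever used; for c <= 0 we return epsilon_0.) *)
Definition smul_fun (c : R) (G : Rbar -> R) (x : Rbar) : R :=
  match x with
  | Finite r => G (Finite (r / c))
  | p_infty => G p_infty
  | m_infty => G m_infty
  end.

Lemma smul_isDplus (c : R) (G : Rbar -> R) :
  0 < c -> isDplus G -> isDplus (smul_fun c G).
Proof.
intros Hc [Hr Hm Hl Hz Ht].
assert (Hic : 0 < / c) by (apply Rinv_0_lt_compat; exact Hc).
split.
- intros [r| |]; simpl; apply Hr.
- intros [r| |] [s| |]; simpl; intros H; try (apply Hm; simpl; tauto).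
  apply Hm; simpl. unfold Rdiv. apply Rmult_le_compat_r; lra.
- intros x eps Heps. simpl. destruct (Hl (x / c) eps Heps) as [d [Hd Hy]].
  exists (c * d). split; [apply Rmult_lt_0_compat; lra|].
  intros y Hy'. apply Hy. unfold Rdiv. split.
  + assert (E : x * / c - d = (x - c * d) * / c) by (field; lra).
    rewrite E. apply Rmult_lt_compat_r; lra.
  + apply Rmult_lt_compat_r; lra.
- intros [r| |]; simpl; intros H; try (apply Hz; simpl; try tauto).
  unfold Rdiv. assert (r * / c <= 0 * / c) by (apply Rmult_le_compat_r; lra).
  lra.
- exact Ht.
Qed.

Definition smul (c : R) (G : Dplus) : Dplus :=
  match Rlt_dec 0 c with
  | left Hc => exist _ (smul_fun c (dval G)) (smul_isDplus c (dval G) Hc (proj2_sig G))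
  | right _ => eps0
  end.

Record triangle_function (tau : Dplus -> Dplus -> Dplus) : Prop := {
  tf_sym   : forall G H, tau G H = tau H G;
  tf_assoc : forall G H K, tau G (tau H K) = tau (tau G H) K;
  tf_mono_l : forall G G' H, dle G G' -> dle (tau G H) (tau G' H);
  tf_mono_r : forall G H H', dle H H' -> dle (tau G H) (tau G H');
  tf_id    : forall G, tau G eps0 = G }.

Definition distributive (tau : Dplus -> Dplus -> Dplus) : Prop :=
  forall c G H, 0 <= c -> smul c (tau G H) = tau (smul c G) (smul c H).

(** Iterated sum: bigoplus tau n G = tau (G 0) (bigoplus tau (n-1) (G (. + 1)));
    indices 0..n-1 correspond to 1..n in the paper; the empty sum is epsilon_0. *)
Fixpoint bigoplus (tau : Dplus -> Dplus -> Dplus) (n : nat) (G : nat -> Dplus) : Dplus :=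
  match n with
  | O => eps0
  | S k => tau (G O) (bigoplus tau k (fun i => G (S i)))
  end.

Definition set_empty {T : Type} : T -> Prop := fun _ => False.
Definition set_union {T : Type} (A B : T -> Prop) : T -> Prop := fun x => A x \/ B x.
Definition set_inter {T : Type} (A B : T -> Prop) : T -> Prop := fun x => A x /\ B x.
Definition set_diff {T : Type} (A B : T -> Prop) : T -> Prop := fun x => A x /\ ~ B x.
Definition set_disjoint {T : Type} (A B : T -> Prop) : Prop := forall x, ~ (A x /\ B x).

Record ring_of_sets {T : Type} (Sigma : (T -> Prop) -> Prop) : Prop := {
  ros_empty : Sigma set_empty;
  ros_union : forall A B, Sigma A -> Sigma B -> Sigma (set_union A B);
  ros_diff  : forall A B, Sigma A -> Sigma B -> Sigma (set_diff A B) }.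

Definition decomposable_measure {T : Type} (tau : Dplus -> Dplus -> Dplus)
  (Sigma : (T -> Prop) -> Prop) (gamma : (T -> Prop) -> Dplus) : Prop :=
  gamma set_empty = eps0 /\
  forall A B, Sigma A -> Sigma B -> set_disjoint A B ->
    gamma (set_union A B) = tau (gamma A) (gamma B).

Definition chi {T : Type} (A : T -> Prop) (x : T) : R :=
  if excluded_middle_informative (A x) then 1 else 0.

Fixpoint rsum (n : nat) (u : nat -> R) : R :=
  match n with
  | O => 0
  | S k => rsum k u + u k
  end.

Definition simple_fun {T : Type} (n : nat) (a : nat -> R) (E : nat -> T -> Prop)
  (x : T) : R := rsum n (fun i => a i * chi (E i) x).

Definition simple_integral {T : Type} (tau : Dplus -> Dplus -> Dplus)
  (gamma : (T -> Prop) -> Dplus) (E : T -> Prop) (n : nat) (a : nat -> R)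
  (Es : nat -> T -> Prop) : Dplus :=
  bigoplus tau n (fun i => smul (a i) (gamma (set_inter E (Es i)))).

(* Main.v *)
Require Import Defs.
From Stdlib Require Import Reals Lra Lia FunctionalExtensionality PropExtensionality ProofIrrelevance Classical.
From Stdlib Require Import ClassicalDescription.
From Coquelicot Require Import Rbar.
Open Scope R_scope.

Lemma set_ext {T : Type} (A B : T -> Prop) : (forall x, A x <-> B x) -> A = B.
Proof. intros H. apply functional_extensionality; intro x. apply propositional_extensionality; auto. Qed.

Lemma dplus_ext (G H : Dplus) : (forall x, dval G x = dval H x) -> G = H.
Proof.
destruct G as [g pg], H as [h ph]; simpl; intros Hx.
assert (g = h) by (apply functional_extensionality; auto). subst.
f_equal. apply proof_irrelevance.
Qed.

Lemma smul_eps0 c : smul c eps0 = eps0.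
Proof.
unfold smul. destruct (Rlt_dec 0 c) as [Hc|Hc]; [|reflexivity].
apply dplus_ext; intros [r| |]; simpl; try reflexivity.
destruct (Rlt_dec 0 (r / c)) as [H1|H1], (Rlt_dec 0 r) as [H2|H2]; try reflexivity.
- exfalso. apply H2. assert (r = (r / c) * c) by (field; lra).
  rewrite H. apply Rmult_lt_0_compat; lra.
- exfalso. apply H1. apply Rdiv_lt_0_compat; lra.
Qed.

Lemma smul_0 G : smul 0 G = eps0.
Proof. unfold smul. destruct (Rlt_dec 0 0) as [h|h]; [exfalso; lra|reflexivity]. Qed.

Section T.
Variable tau : Dplus -> Dplus -> Dplus.
Hypothesis Htau : triangle_function tau.

Lemma bigoplus_ext n G H : (forall i, (i < n)%nat -> G i = H i) ->
  bigoplus tau n G = bigoplus tau n H.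
Proof.
revert G H; induction n; intros G H Hi; simpl; [reflexivity|].
rewrite (Hi 0%nat) by lia. f_equal. apply IHn. intros i Hl; apply Hi; lia.
Qed.

Lemma tau_eps0_l G : tau eps0 G = G.
Proof. rewrite (tf_sym _ Htau). apply (tf_id _ Htau). Qed.

Lemma bigoplus_eps0 n : bigoplus tau n (fun _ => eps0) = eps0.
Proof. induction n; simpl; [reflexivity|]. rewrite IHn. apply (tf_id _ Htau). Qed.

Lemma tau_swap a b c d : tau (tau a b) (tau c d) = tau (tau a c) (tau b d).
Proof.
destruct Htau as [Hs Ha _ _ _].
rewrite <- Ha, (Ha b c d), (Hs b c), <- (Ha c b d), Ha. reflexivity.
Qed.

Lemma bigoplus_tau n A B :
  bigoplus tau n (fun i => tau (A i) (B i)) = tau (bigoplus tau n A) (bigoplus tau n B).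
Proof.
revert A B; induction n; intros A B; simpl.
- symmetry; apply (tf_id _ Htau).
- rewrite IHn. apply tau_swap.
Qed.

Lemma bigoplus_swap n m (G : nat -> nat -> Dplus) :
  bigoplus tau n (fun i => bigoplus tau m (fun j => G i j)) =
  bigoplus tau m (fun j => bigoplus tau n (fun i => G i j)).
Proof.
revert G; induction n; intros G; simpl.
- symmetry; apply bigoplus_eps0.
- rewrite (IHn (fun i j => G (S i) j)). rewrite <- bigoplus_tau. reflexivity.
Qed.

Hypothesis Hdist : distributive tau.

Lemma smul_bigoplus c n G : 0 <= c ->
  smul c (bigoplus tau n G) = bigoplus tau n (fun i => smul c (G i)).
Proof.
revert G; induction n; intros G Hc; simpl.
- apply smul_eps0.
- rewrite Hdist by lra. rewrite IHn by lra. reflexivity.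
Qed.
End T.


Lemma rsum_zero n u : (forall k, (k < n)%nat -> u k = 0) -> rsum n u = 0.
Proof.
induction n; intros H; simpl; [reflexivity|].
rewrite IHn by (intros; apply H; lia). rewrite H by lia. lra.
Qed.

Lemma rsum_single n u i : (i < n)%nat ->
  (forall k, (k < n)%nat -> k <> i -> u k = 0) -> rsum n u = u i.
Proof.
induction n; intros Hi H; [lia|]. simpl.
destruct (Nat.eq_dec i n) as [->|Hne].
- rewrite rsum_zero; [lra|]. intros k Hk; apply H; lia.
- rewrite IHn by (try lia; intros; apply H; lia). rewrite (H n) by lia. lra.
Qed.

Lemma chi_in {T} (A : T -> Prop) x : A x -> chi A x = 1.
Proof. unfold chi; destruct excluded_middle_informative; tauto. Qed.
Lemma chi_out {T} (A : T -> Prop) x : ~ A x -> chi A x = 0.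
Proof. unfold chi; destruct excluded_middle_informative; tauto. Qed.

Lemma simple_at {T} n a (Es : nat -> T -> Prop) i x :
  (i < n)%nat ->
  (forall i j, (i < n)%nat -> (j < n)%nat -> i <> j -> set_disjoint (Es i) (Es j)) ->
  Es i x -> simple_fun n a Es x = a i.
Proof.
intros Hi Hd Hx. unfold simple_fun.
rewrite (rsum_single _ _ i Hi).
- rewrite chi_in by exact Hx. lra.
- intros k Hk Hki. rewrite chi_out; [lra|]. intros Hk'.
  apply (Hd k i Hk Hi Hki x). tauto.
Qed.

Lemma simple_out {T} n a (Es : nat -> T -> Prop) x :
  (forall i, (i < n)%nat -> ~ Es i x) -> simple_fun n a Es x = 0.
Proof.
intros H. unfold simple_fun. apply rsum_zero. intros k Hk.
rewrite chi_out by (apply H; exact Hk). lra.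
Qed.

Lemma ros_inter {T} (Sigma : (T -> Prop) -> Prop) A B : ring_of_sets Sigma ->
  Sigma A -> Sigma B -> Sigma (set_inter A B).
Proof.
intros HS HA HB.
replace (set_inter A B) with (set_diff A (set_diff A B)).
- apply (ros_diff _ HS); auto. apply (ros_diff _ HS); auto.
- apply set_ext; intros x; unfold set_diff, set_inter; split.
  + intros [H1 H2]; split; auto. apply NNPP; intros H3; apply H2; auto.
  + intros [H1 H2]; split; auto. tauto.
Qed.

Definition Rm {T} (m : nat) (Fs : nat -> T -> Prop) (A : T -> Prop) : T -> Prop :=
  fun x => A x /\ forall j, (j < m)%nat -> ~ Fs j x.

Lemma decomp {T} tau (Sigma : (T -> Prop) -> Prop) gamma :
  triangle_function tau -> ring_of_sets Sigma -> decomposable_measure tau Sigma gamma ->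
  forall m Fs A, Sigma A -> (forall j, (j < m)%nat -> Sigma (Fs j)) ->
  (forall i j, (i < m)%nat -> (j < m)%nat -> i <> j -> set_disjoint (Fs i) (Fs j)) ->
  Sigma (Rm m Fs A) /\
  gamma A = tau (bigoplus tau m (fun j => gamma (set_inter A (Fs j)))) (gamma (Rm m Fs A)).
Proof.
intros Htau HS [Hg0 Hg] m. induction m; intros Fs A HA HF Hd.
- assert (E : Rm 0 Fs A = A) by (apply set_ext; intros x; unfold Rm; split; [tauto|]; intros; split; auto; intros; lia).
  rewrite E. split; auto. simpl. symmetry; apply tau_eps0_l; auto.
- assert (HA0 : Sigma (set_inter A (Fs 0%nat))) by (apply ros_inter; auto; apply HF; lia).
  assert (HA1 : Sigma (set_diff A (Fs 0%nat))) by (apply (ros_diff _ HS); auto; apply HF; lia).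
  destruct (IHm (fun j => Fs (S j)) (set_diff A (Fs 0%nat)) HA1) as [IH1 IH2].
  { intros; apply HF; lia. }
  { intros i j Hi Hj Hij; apply Hd; lia. }
  assert (ER : Rm m (fun j => Fs (S j)) (set_diff A (Fs 0%nat)) = Rm (S m) Fs A).
  { apply set_ext; intros x; unfold Rm, set_diff; split.
    - intros [[H1 H2] H3]; split; auto. intros j Hj. destruct j; auto. apply H3; lia.
    - intros [H1 H3]; split; [split; auto; apply H3; lia|]. intros j Hj; apply H3; lia. }
  rewrite ER in IH1, IH2. split; auto.
  assert (EA : A = set_union (set_inter A (Fs 0%nat)) (set_diff A (Fs 0%nat))).
  { apply set_ext; intros x; unfold set_union, set_inter, set_diff; split; [|tauto].
    intros H; destruct (classic (Fs 0%nat x)); tauto. }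
  rewrite EA at 1. rewrite Hg; auto.
  2:{ intros x; unfold set_inter, set_diff; tauto. }
  rewrite IH2. simpl. rewrite (tf_assoc _ Htau). f_equal. f_equal.
  apply bigoplus_ext. intros j Hj. f_equal. apply set_ext; intros x.
  unfold set_inter, set_diff; split; [tauto|]. intros [H1 H2]; split; auto; split; auto.
  intros H0. refine (Hd (S j) 0%nat _ _ _ x _); try lia; auto.
Qed.

Lemma side {T} tau (Sigma : (T -> Prop) -> Prop) gamma E n alpha Es m beta Fs :
  triangle_function tau -> distributive tau -> ring_of_sets Sigma ->
  decomposable_measure tau Sigma gamma -> Sigma E ->
  (forall i, (i < n)%nat -> 0 <= alpha i) ->
  (forall i, (i < n)%nat -> Sigma (Es i)) ->
  (forall i j, (i < n)%nat -> (j < n)%nat -> i <> j -> set_disjoint (Es i) (Es j)) ->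
  (forall j, (j < m)%nat -> Sigma (Fs j)) ->
  (forall i j, (i < m)%nat -> (j < m)%nat -> i <> j -> set_disjoint (Fs i) (Fs j)) ->
  (forall x, simple_fun n alpha Es x = simple_fun m beta Fs x) ->
  bigoplus tau n (fun i => smul (alpha i) (gamma (set_inter E (Es i)))) =
  bigoplus tau n (fun i => bigoplus tau m (fun j =>
     smul (alpha i) (gamma (set_inter (set_inter E (Es i)) (Fs j))))).
Proof.
intros Htau Hdist HS Hg HE Ha HEs HdE HFs HdF Hfg.
apply bigoplus_ext. intros i Hi.
assert (HA : Sigma (set_inter E (Es i))) by (apply ros_inter; auto).
destruct (decomp tau Sigma gamma Htau HS Hg m Fs _ HA HFs HdF) as [_ D].
rewrite D, Hdist by (apply Ha; auto).
rewrite smul_bigoplus by (auto; apply Ha; auto).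
assert (Z : smul (alpha i) (gamma (Rm m Fs (set_inter E (Es i)))) = eps0).
{ destruct (classic (exists x, Rm m Fs (set_inter E (Es i)) x)) as [[x Hx]|Hn].
  - destruct Hx as [[Hx1 Hx2] Hx3].
    assert (alpha i = 0).
    { rewrite <- (simple_at n alpha Es i x Hi HdE Hx2), Hfg. apply simple_out; auto. }
    rewrite H. apply smul_0.
  - replace (Rm m Fs (set_inter E (Es i))) with (@set_empty T).
    + destruct Hg as [Hg0 _]. rewrite Hg0. apply smul_eps0.
    + apply set_ext; intros x; unfold set_empty; split; [tauto|]. intros Hx; apply Hn; eauto. }
rewrite Z. apply (tf_id _ Htau).
Qed.

Theorem lemma4p2 (tau : Dplus -> Dplus -> Dplus) (Omega : Type)
  (Sigma : (Omega -> Prop) -> Prop) (gamma : (Omega -> Prop) -> Dplus)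
  (E : Omega -> Prop)
  (n : nat) (alpha : nat -> R) (Es : nat -> Omega -> Prop)
  (m : nat) (beta : nat -> R) (Fs : nat -> Omega -> Prop) :
  triangle_function tau -> distributive tau ->
  inhabited Omega -> ring_of_sets Sigma ->
  decomposable_measure tau Sigma gamma -> Sigma E ->
  (forall i, (i < n)%nat -> 0 <= alpha i) ->
  (forall i, (i < n)%nat -> Sigma (Es i)) ->
  (forall i j, (i < n)%nat -> (j < n)%nat -> i <> j -> set_disjoint (Es i) (Es j)) ->
  (forall j, (j < m)%nat -> 0 <= beta j) ->
  (forall j, (j < m)%nat -> Sigma (Fs j)) ->
  (forall i j, (i < m)%nat -> (j < m)%nat -> i <> j -> set_disjoint (Fs i) (Fs j)) ->
  (forall x, simple_fun n alpha Es x = simple_fun m beta Fs x) ->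
  bigoplus tau n (fun i => smul (alpha i) (gamma (set_inter E (Es i)))) =
  bigoplus tau m (fun j => smul (beta j) (gamma (set_inter E (Fs j)))).
Proof.
intros Htau Hdist _ HS Hg HE Ha HEs HdE Hb HFs HdF Hfg.
rewrite (side tau Sigma gamma E n alpha Es m beta Fs); auto.
rewrite (side tau Sigma gamma E m beta Fs n alpha Es); auto.
rewrite bigoplus_swap by auto.
apply bigoplus_ext. intros j Hj. apply bigoplus_ext. intros i Hi.
assert (ES : set_inter (set_inter E (Es i)) (Fs j) = set_inter (set_inter E (Fs j)) (Es i)).
{ apply set_ext; intros x; unfold set_inter; tauto. }
rewrite ES.
destruct (classic (exists x, set_inter (set_inter E (Fs j)) (Es i) x)) as [[x [[H1 H2] H3]]|Hn].
- replace (alpha i) with (beta j). reflexivity.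
  rewrite <- (simple_at n alpha Es i x Hi HdE H3), Hfg.
  symmetry; apply simple_at; auto.
- replace (set_inter (set_inter E (Fs j)) (Es i)) with (@set_empty Omega).
  + destruct Hg as [Hg0 _]. rewrite Hg0, !smul_eps0. reflexivity.
  + apply set_ext; intros x; unfold set_empty; split; [tauto|]. intros Hx; apply Hn; eauto.
Qed.
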